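(* Let $K$ be a field, let $X$ be a set, let $F \subseteq K\langle X\rangle$ be such that no polynomial in $F$ has a constant term, and let $f \in (F)$. Let $Q=(V,E,X,s,t,l)$ be a labelled quiver whose edges have unique labels in $X$ (i.e. $l$ is injective), and assume that $f$ and all elements of $F$ are compatible with $Q$. Then, for every representation $\mathcal{R}=(\mathcal{V},\varphi)$ of $Q$ over $K$ such that the realizations of the elements of $F$ with respect to $\mathcal{R}$ are zero, the realization of $f$ with respect to $\mathcal{R}$ is zero.
   Context: $K\langle X\rangle$ denotes the free algebra of noncommutative polynomials in the indeterminates $X$ with coefficients in $K$; monomials are words in $\langle X\rangle$ (the free monoid on $X$, including the empty word $1$). Every $f$ has a unique representation $f=\sum_m c_m m$ with finitely many nonzero $c_m\in K$, and $\operatorname{supp}(f)=\{m : c_m\neq 0\}$. $(F)$ is the two-sided ideal generated by $F$. A labelled quiver $Q=(V,E,X,s,t,l)$ consists of a set of vertices $V$, a set of edges $E$, maps $s,t:E\to V$ (source, target) and a labelling $l:E\to X$. A nonempty path $p=e_n\cdots e_1$ (edges with $s(e_{i+1})=t(e_i)$) has label $l(p)=l(e_n)\cdots l(e_1)\in\langle X\rangle$, source $s(e_1)$ and target $t(e_n)$; for each vertex $v$ there is an empty path $\epsilon_v$ with label $1$ and source and target $v$. For a monomial $m$, $\sigma(m)=\{(s(p),t(p)) : p \text{ a path in } Q \text{ with } l(p)=m\}$, and for a polynomial $f$, $\sigma(f)=\bigcap_{m\in\operatorname{supp}(f)}\sigma(m)$ (so $\sigma(0)=V\times V$). $f$ is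 compatible with $Q$ if $\sigma(f)\neq\emptyset$. For $v,w\in V$ let $K\langle X\rangle_{v,w}=\{f : (v,w)\in\sigma(f)\}$. A representation $(\mathcal{V},\varphi)$ of $Q$ over $K$ assigns to each vertex $v$ a $K$-vector space $\mathcal{V}_v$ and to each edge $e$ a $K$-linear map $\varphi(e):\mathcal{V}_{s(e)}\to\mathcal{V}_{t(e)}$. For $v,w\in V$, the realization map $\varphi_{v,w}:K\langle X\rangle_{v,w}\to L(\mathcal{V}_v,\mathcal{V}_w)$ is the $K$-linear map with $\varphi_{v,w}(l(e_n\cdots e_1))=\varphi(e_n)\cdots\varphi(e_1)$ for each nonempty path $e_n\cdots e_1$ from $v$ to $w$ and $\varphi_{v,v}(1)=\mathrm{id}_{\mathcal{V}_v}$; for $f\in K\langle X\rangle_{v,w}$, $\varphi_{v,w}(f)$ is called a realization of $f$ with respect to the representation. (Under the hypotheses of unique labels and no constant terms, these maps are well defined and a compatible nonzero polynomial has a unique realization.) *)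

(* Defs.v *)
From HB Require Import structures.
From mathcomp Require Import all_boot all_order all_algebra.
From mathcomp Require Import finmap.
From mathcomp.multinomials Require Import monalg.
From Stdlib Require Import ClassicalEpsilon.

Set Implicit Arguments.
Unset Strict Implicit.
Unset Printing Implicit Defensive.

Import GRing.Theory.
Local Open Scope ring_scope.

(* The free algebra K<X>: finitely supported K-valued functions on the free
   monoid {fmonom X} (words over X, empty word = mone), with the
   concatenation (non-commutative) product. *)
Notation freealg K X := {malg K[{fmonom X}]}.

Definition const_term (K : fieldType) (X : choiceType) (f : freealg K X) : K :=
  f@_(mone : {fmonom X}).

Definition in_ideal (K : fieldType) (X : choiceType)
    (F : freealg K X -> Prop) (f : freealg K X) : Prop :=
  exists (n : nat) (a g b : 'I_n -> freealg K X),
    (forall i, F (g i)) /\ f = \sum_(i < n) a i * g i * b i.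

(* A path p = e_n ... e_1 from v to w
   with label l(e_n) ... l(e_1) (as a word, leftmost letter = label of the last
   edge e_n).  [qpath s t l v w m] is the type of paths from v to w with label m;
   [pnil v] is the empty path at v (label 1), and [pcons e p] extends a path p
   ending at s e by the edge e. *)
Inductive qpath (V E X : Type) (s t : E -> V) (l : E -> X) (v : V)
    : V -> seq X -> Type :=
| pnil : qpath s t l v v [::]
| pcons (e : E) (m : seq X) :
    qpath s t l v (s e) m -> qpath s t l v (t e) (l e :: m).

Definition in_sigma_mon (V E : Type) (X : choiceType) (s t : E -> V) (l : E -> X)
    (v w : V) (m : {fmonom X}) : Prop :=
  inhabited (qpath s t l v w m).

Definition in_sigma (K : fieldType) (V E : Type) (X : choiceType)
    (s t : E -> V) (l : E -> X) (v w : V) (f : freealg K X) : Prop :=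
  forall m : {fmonom X}, m \in msupp f -> in_sigma_mon s t l v w m.

Definition compatible (K : fieldType) (V E : Type) (X : choiceType)
    (s t : E -> V) (l : E -> X) (f : freealg K X) : Prop :=
  exists v w : V, in_sigma s t l v w f.

Section Realization.
Variables (K : fieldType) (V E : Type) (X : choiceType).
Variables (s t : E -> V) (l : E -> X).
Variables (Vsp : V -> lmodType K) (phi : forall e : E, {linear Vsp (s e) -> Vsp (t e)}).

Fixpoint real_path (v w : V) (m : seq X) (p : qpath s t l v w m) : Vsp v -> Vsp w :=
  match p in qpath _ _ _ _ w' m' return Vsp v -> Vsp w' with
  | pnil => fun x => x
  | pcons e _ p' => fun x => phi e (real_path p' x)
  end.

(* Realization of a monomial m from v to w: phi along a path from v to w
   labelled m (a path is chosen if one exists; with unique labels it is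
   unique).  Only used when (v,w) \in sigma(m). *)
Definition real_mon (v w : V) (m : {fmonom X}) : Vsp v -> Vsp w :=
  match excluded_middle_informative (inhabited (qpath s t l v w m)) with
  | left H => real_path (epsilon H (fun _ => True))
  | right _ => fun _ => 0
  end.
Arguments real_mon : clear implicits.

Definition realization (v w : V) (f : freealg K X) (x : Vsp v) : Vsp w :=
  \sum_(m <- msupp f) f@_m *: real_mon v w m x.
Arguments realization : clear implicits.

Definition realization_zero (v w : V) (f : freealg K X) : Prop :=
  forall x : Vsp v, realization v w f x = 0.
Arguments realization_zero : clear implicits.

End Realization.
Arguments real_mon {K V E X s t} l {Vsp} phi v w m.
Arguments realization {K V E X s t} l {Vsp} phi v w f x.
Arguments realization_zero {K V E X s t} l {Vsp} phi v w f.

(* Main.v *)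
Require Import Defs.
From HB Require Import structures.
From mathcomp Require Import all_boot all_order all_algebra.
From mathcomp Require Import finmap.
From mathcomp.multinomials Require Import monalg.
From Stdlib Require Import ClassicalEpsilon Classical Eqdep.

Set Implicit Arguments.
Unset Strict Implicit.
Unset Printing Implicit Defensive.
Import GRing.Theory.
Local Open Scope fset_scope.
Local Open Scope ring_scope.

Section Paths.
Variables (K : fieldType) (V E : Type) (X : choiceType).
Variables (s t : E -> V) (l : E -> X).
Hypothesis linj : injective l.
Variables (Vsp : V -> lmodType K) (phi : forall e : E, {linear Vsp (s e) -> Vsp (t e)}).

Notation qp := (qpath s t l).
Notation rp := (real_path phi).

Lemma rp_uniq v w1 m1 (p1 : qp v w1 m1) w2 m2 (p2 : qp v w2 m2) (y : Vsp v) :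
  m1 = m2 -> existT Vsp w1 (rp p1 y) = existT Vsp w2 (rp p2 y).
Proof.
revert w2 m2 p2; induction p1 as [|e m p1 IH]; intros w2 m2 p2; destruct p2 as [|e' m' p2] => //= Hm.
case: Hm => He Hm; have ee := linj He; subst e' m'.
have H := IH _ _ p2 erefl. have H2 := inj_pair2 _ _ _ _ _ H. by rewrite H2.
Qed.

Lemma rp_uniq' v w m (p1 p2 : qp v w m) (y : Vsp v) : rp p1 y = rp p2 y.
Proof. exact: inj_pair2 (rp_uniq p1 p2 y erefl). Qed.

Fixpoint pcat v u w m2 m1 (q2 : qp v u m2) (q1 : qp u w m1) : qp v w (m1 ++ m2) :=
  match q1 in qpath _ _ _ _ w' m' return qp v w' (m' ++ m2) with
  | pnil => q2
  | pcons e m q1' => pcons (pcat q2 q1')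
  end.

Lemma rp_cat v u w m2 m1 (q2 : qp v u m2) (q1 : qp u w m1) y :
  rp (pcat q2 q1) y = rp q1 (rp q2 y).
Proof. by elim: q1 => //= e m q1 ->. Qed.

Lemma psplit v w m (p : qp v w m) m1 m2 : m = m1 ++ m2 ->
  exists u, inhabited (qp v u m2) /\ inhabited (qp u w m1).
Proof.
elim: p m1 m2 => [|e m0 p IH] [|x m1] m2 //=.
- by move=> <-; exists v; split; constructor; apply: pnil.
- move=> H; subst m2; exists (t e); split; constructor; [exact: pcons p | exact: pnil].
- case=> Hx Hm; subst x; have [u [[q2] [q1]]] := IH _ _ Hm.
  by exists u; split; constructor; [exact: q2 | exact: pcons q1].
Qed.

Lemma pnil_eq v w m (p : qp v w m) : m = [::] -> v = w.
Proof. by case: p. Qed.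

Lemma pone v w m (p : qp v w m) x : m = [:: x] -> exists e, [/\ l e = x, v = s e & w = t e].
Proof.
case: p => //= e m0 p0 [<- Hm]; exists e; split => //; exact: pnil_eq p0 Hm.
Qed.

Lemma pends v w m (p : qp v w m) v' w' (p' : qp v' w' m) : m != [::] -> v = v' /\ w = w'.
Proof.
case: m p p' => // x m p p' _; split.
- have [r [y Hr']] : exists r y, x :: m = r ++ [:: y].
    by exists (belast x m), (last x m); rewrite cats1 lastI.
  have [u [[q2] _]] := psplit p Hr'.
  have [u' [[q2'] _]] := psplit p' Hr'.
  have [e [He -> _]] := pone q2 erefl.
  have [e' [He' -> _]] := pone q2' erefl.
  by rewrite (linj (etrans He (esym He'))).
- have [u [_ [q1]]] := psplit p (m1 := [:: x]) (m2 := m) erefl.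
  have [u' [_ [q1']]] := psplit p' (m1 := [:: x]) (m2 := m) erefl.
  have [e [He _ ->]] := pone q1 erefl.
  have [e' [He' _ ->]] := pone q1' erefl.
  by rewrite (linj (etrans He (esym He'))).
Qed.


Lemma rp_add v w m (p : qp v w m) (y z : Vsp v) : rp p (y + z) = rp p y + rp p z.
Proof. by elim: p => //= e m0 p ->; rewrite linearD. Qed.

Lemma rp_scale v w m (p : qp v w m) c (y : Vsp v) : rp p (c *: y) = c *: rp p y.
Proof. by elim: p => //= e m0 p ->; rewrite linearZ. Qed.

Notation RM := (real_mon l phi).

Lemma RM_path v w (M : {fmonom X}) sq (p : qp v w sq) y :
  (M : seq X) = sq -> RM v w M y = rp p y.
Proof.
move=> HM; rewrite /real_mon; case: excluded_middle_informative => [H|H].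
  exact: inj_pair2 (rp_uniq _ _ _ HM).
by exfalso; apply: H; rewrite HM; constructor.
Qed.

Lemma RM_nopath v w (M : {fmonom X}) y :
  ~ inhabited (qp v w M) -> RM v w M y = 0.
Proof. by move=> H; rewrite /real_mon; case: excluded_middle_informative. Qed.

Lemma RM_cases v w (M : {fmonom X}) :
  (exists p : qp v w M, forall y, RM v w M y = rp p y) \/
  (forall y, RM v w M y = 0).
Proof.
case: (classic (inhabited (qp v w M))) => [[p]|H].
  by left; exists p => y; exact: RM_path.
by right => y; exact: RM_nopath.
Qed.

Lemma RMD v w M (y z : Vsp v) : RM v w M (y + z) = RM v w M y + RM v w M z.
Proof. by case: (RM_cases v w M) => [[p Hp]|Hp]; rewrite !Hp ?addr0 // rp_add. Qed.

Lemma RMZ v w M c (y : Vsp v) : RM v w M (c *: y) = c *: RM v w M y.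
Proof. by case: (RM_cases v w M) => [[p Hp]|Hp]; rewrite !Hp ?scaler0 // rp_scale. Qed.

Lemma RM0 v w M : RM v w M 0 = 0.
Proof. by rewrite -(scale0r (0 : Vsp v)) RMZ scale0r. Qed.

Lemma RM_sum v w M (I : Type) (r : seq I) (F : I -> Vsp v) :
  RM v w M (\sum_(i <- r) F i) = \sum_(i <- r) RM v w M (F i).
Proof. elim: r => [|i r IH]; by rewrite ?big_nil ?RM0 // !big_cons RMD IH. Qed.

Lemma RM_split v w a b (m1 m m2 : {fmonom X}) (pm : qp a b m) y :
  (m : seq X) != [::] ->
  RM v w (mmul (mmul m1 m) m2) y = RM b w m1 (RM a b m (RM v a m2 y)).
Proof.
move=> mn0.
have Hs : (mmul (mmul m1 m) m2 : seq X) = (m1 ++ m) ++ m2 by rewrite !fmM.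
case: (classic (inhabited (qp v w (mmul (mmul m1 m) m2)))) => [[P]|H].
  have [u [[q2] [q12]]] := psplit P Hs.
  have [u' [[qm] [q1]]] := psplit q12 (erefl (m1 ++ m)).
  have [Hu Hu'] := pends qm pm mn0; subst u u'.
  rewrite (RM_path (pcat q2 (pcat qm q1))) //.
  by rewrite !rp_cat (RM_path q1) // (RM_path qm) // (RM_path q2).
rewrite RM_nopath //.
case: (classic (inhabited (qp v a m2))) => [[q2]|H2]; last by rewrite (RM_nopath _ H2) !RM0.
case: (classic (inhabited (qp b w m1))) => [[q1]|H1]; last by rewrite (RM_nopath _ H1).
by exfalso; apply: H; rewrite Hs; constructor; exact: pcat q2 (pcat pm q1).
Qed.

End Paths.
Lemma UZ (K : fieldType) (X : choiceType) (c : K) (k : {fmonom X}) :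
  << c *g k >> = c *: (<< k >> : freealg K X).
Proof. by apply/malgP => k'; rewrite mcoeffZ !mcoeffU mulr_natr. Qed.

Lemma UM (K : fieldType) (X : choiceType) (k1 k2 : {fmonom X}) :
  (<< k1 >> : freealg K X) * << k2 >> = << mmul k1 k2 >>.
Proof. by rewrite malgME !msuppU1 !big_seq_fset1 !mcoeffUU mulr1. Qed.

Section Real.
Variables (K : fieldType) (V E : Type) (X : choiceType).
Variables (s t : E -> V) (l : E -> X).
Variables (Vsp : V -> lmodType K) (phi : forall e : E, {linear Vsp (s e) -> Vsp (t e)}).
Variables (v w : V) (x : Vsp v).

Notation RM := (real_mon l phi).
Notation Rz f := (realization l phi v w f x).

Lemma RzE (f : freealg K X) (D : {fset {fmonom X}}) : msupp f `<=` D ->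
  Rz f = \sum_(m <- D) f@_m *: RM v w m x.
Proof.
move=> sD; rewrite /realization; apply: big_fset_incl => // m _ /mcoeff_outdom ->.
by rewrite scale0r.
Qed.

Lemma RzD f g : Rz (f + g) = Rz f + Rz g.
Proof.
rewrite (@RzE (f + g) (msupp f `|` msupp g)) ?msuppD_le //.
rewrite (@RzE f (msupp f `|` msupp g)) ?fsubsetUl //.
rewrite (@RzE g (msupp f `|` msupp g)) ?fsubsetUr //.
by rewrite -big_split /=; apply: eq_bigr => m _; rewrite mcoeffD scalerDl.
Qed.

Lemma Rz0 : Rz 0 = 0.
Proof. by rewrite /realization msupp0 big_nil. Qed.

Lemma RzZ c f : Rz (c *: f) = c *: Rz f.
Proof.
rewrite (@RzE (c *: f) (msupp f)) ?msuppZ_le // /realization scaler_sumr.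
by apply: eq_bigr => m _; rewrite mcoeffZ scalerA.
Qed.

Lemma Rz_sum (I : Type) (r : seq I) (F : I -> freealg K X) :
  Rz (\sum_(i <- r) F i) = \sum_(i <- r) Rz (F i).
Proof. elim: r => [|i r IH]; by rewrite ?big_nil ?Rz0 // !big_cons RzD IH. Qed.

Lemma RzU m : Rz << m >> = RM v w m x.
Proof. by rewrite /realization msuppU1 big_seq_fset1 mcoeffUU scale1r. Qed.

End Real.

Lemma scaleAr_malg (K : fieldType) (X : choiceType) (c : K) (h u : freealg K X) :
  h * (c *: u) = c *: (h * u).
Proof.
apply/malgP => k; rewrite mcoeffZ (@mcoeffMrw _ _ (msupp h) (msupp u)) ?msuppZ_le //.
rewrite (mcoeffMr h u) mulr_sumr; apply: eq_bigr => k2 _; rewrite mulr_sumr.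
by apply: eq_bigr => k1 _; rewrite mcoeffZ mulrCA mulrnAr.
Qed.

Lemma Rz_l (K : fieldType) (V E : Type) (X : choiceType) (s t : E -> V) (l : E -> X)
  (Vsp : V -> lmodType K) (phi : forall e : E, {linear Vsp (s e) -> Vsp (t e)})
  v w (x : Vsp v) (a h : freealg K X) :
  (forall m, realization l phi v w (<< m >> * h) x = 0) ->
  realization l phi v w (a * h) x = 0.
Proof.
move=> H; rewrite (monalgE a) mulr_suml Rz_sum big1 // => m _.
by rewrite UZ -scalerAl RzZ H scaler0.
Qed.

Lemma Rz_r (K : fieldType) (V E : Type) (X : choiceType) (s t : E -> V) (l : E -> X)
  (Vsp : V -> lmodType K) (phi : forall e : E, {linear Vsp (s e) -> Vsp (t e)})
  v w (x : Vsp v) (h b : freealg K X) :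
  (forall m, realization l phi v w (h * << m >>) x = 0) ->
  realization l phi v w (h * b) x = 0.
Proof.
move=> H; rewrite (monalgE b) mulr_sumr Rz_sum big1 // => m _.
by rewrite UZ scaleAr_malg RzZ H scaler0.
Qed.

Lemma key (K : fieldType) (V E : Type) (X : choiceType) (s t : E -> V) (l : E -> X)
  (linj : injective l) (Vsp : V -> lmodType K)
  (phi : forall e : E, {linear Vsp (s e) -> Vsp (t e)}) (g : freealg K X) (p q : V) :
  const_term g = 0 -> in_sigma s t l p q g ->
  (forall y, realization l phi p q g y = 0) ->
  forall v w (x : Vsp v) (a b : freealg K X), realization l phi v w (a * g * b) x = 0.
Proof.
move=> Hc Hs Hz v w x a b.
rewrite -mulrA; apply: Rz_l => m1; rewrite mulrA; apply: Rz_r => m2.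
rewrite [g](monalgE g) mulr_sumr mulr_suml Rz_sum.
transitivity (real_mon l phi q w m1 (realization l phi p q g (real_mon l phi v p m2 x))); last first.
  by rewrite Hz RM0.
rewrite [realization _ _ p q g _]/realization (RM_sum linj); apply: eq_big_seq => m Hm.
rewrite (UZ (g@_m) m) scaleAr_malg -scalerAl RzZ UM UM RzU (RMZ linj).
have [pm] := Hs m Hm.
rewrite (@RM_split _ _ _ _ _ _ _ linj _ _ v w _ _ m1 _ m2 pm) ?(RMZ linj) //.
apply/negP => /eqP m0.
have : m = mone by apply/val_inj; rewrite /= m0 fm1.
move=> mE; move: Hm; rewrite -mcoeff_neq0 mE.
by rewrite -[g@_mone]/(const_term g) Hc eqxx.
Qed.

Theorem theorem1p1 (K : fieldType) (X : choiceType)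
    (F : freealg K X -> Prop) (f : freealg K X)
    (V E : Type) (s t : E -> V) (l : E -> X) :
  (forall g, F g -> const_term g = 0) ->
  in_ideal F f ->
  injective l ->
  compatible s t l f ->
  (forall g, F g -> compatible s t l g) ->
  forall (Vsp : V -> lmodType K)
         (phi : forall e : E, {linear Vsp (s e) -> Vsp (t e)}),
    (forall g, F g -> forall v w : V, in_sigma s t l v w g ->
       realization_zero l phi v w g) ->
    forall v w : V, in_sigma s t l v w f -> realization_zero l phi v w f.
Proof.
move=> Hc [n [a [g [b [Fg ->]]]]] linj _ Fcomp Vsp phi Hz v w _ x.
rewrite Rz_sum big1 // => i _.
have [p [q Hpq]] := Fcomp _ (Fg i).
apply: (key linj (Hc _ (Fg i)) Hpq). exact: (Hz _ (Fg i) p q Hpq).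
Qed.
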